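(* For every field $\mathbb{K}$, $\mathcal{G}+\mathcal{G}=\mathbb{K}((t^{-1}))$.
   Context: $\mathbb{K}((t^{-1}))$ is the field of formal Laurent series $\sum_{n=-\infty}^{\infty}\alpha_n t^{-n}$ over the field $\mathbb{K}$ (only finitely many nonzero $\alpha_n$ with $n<0$), with $\deg\alpha=\sup\{-n:\alpha_n\ne0\}$. Every $\alpha$ has a unique continued fraction expansion $[a_0;a_1,a_2,\dots]$ with $a_n\in\mathbb{K}[t]$, $\deg a_n\ge1$ for $n\ge1$, finite iff $\alpha\in\mathbb{K}(t)$. $a_n(\alpha)$ is the $n$-th partial quotient and $d_n(\alpha)=\deg a_n(\alpha)$. $\mathcal{G}=\{\alpha\in\mathbb{K}((t^{-1})):d_n(\alpha)\to\infty\}\cup\mathbb{K}(t)$. *)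

(* Defs.v *)
From mathcomp Require Import all_boot all_order all_algebra.
Set Implicit Arguments. Unset Strict Implicit. Unset Printing Implicit Defensive.
Import Order.TTheory GRing.Theory Num.Theory.
Local Open Scope ring_scope.

(* A formal Laurent series in t^{-1} over K is represented by its coefficient
   function c : int -> K, where c n is the coefficient of t^n, subject to
   c n = 0 for all sufficiently large n (finitely many positive powers). *)

Section Laurent.
Variable K : fieldType.

Definition lbounded (f : int -> K) (N : nat) : Prop :=
  forall n : int, (N%:Z < n) -> f n = 0.

Definition is_laurent (f : int -> K) : Prop := exists N : nat, lbounded f N.

(* Cauchy product, valid when both factors vanish above N:
   (f g)_n = sum_{i = n-N}^{N} f_i g_{n-i}  (empty/zero terms otherwise). *)
Definition lmulN (N : nat) (f g : int -> K) (n : int) : K :=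
  \sum_(k < `|(2 * N + 1)%N%:Z - n|%N) f (N%:Z - k%:Z) * g (n - N%:Z + k%:Z).

Definition lmul_eq (f g h : int -> K) : Prop :=
  exists N : nat, lbounded f N /\ lbounded g N /\ forall n, h n = lmulN N f g n.

Definition polyL (p : {poly K}) (n : int) : K :=
  match n with Posz m => p`_m | Negz _ => 0 end.

Definition is_ratfun (alpha : int -> K) : Prop :=
  exists p q : {poly K}, q != 0 /\ lmul_eq (polyL q) alpha (polyL p).

(* (a, x) is the (infinite) continued fraction expansion of alpha:
   x n are the complete quotients, x 0 = alpha, a n = polynomial part of x n,
   and x (n+1) = 1 / (x n - a n).  Such data exist (and are unique) exactly
   when alpha is not in K(t); a n is then the n-th partial quotient. *)
Definition cf_expansion (alpha : int -> K) (a : nat -> {poly K})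
    (x : nat -> int -> K) : Prop :=
  x 0%N = alpha /\
  forall n : nat,
    is_laurent (x n) /\
    (forall m : int, 0 <= m -> x n m = polyL (a n) m) /\
    lmul_eq (fun m => x n m - polyL (a n) m) (x n.+1) (polyL 1).

Definition degs_to_infty (a : nat -> {poly K}) : Prop :=
  forall M : nat, exists N : nat, forall n : nat, (N <= n)%N -> (M <= (size (a n)).-1)%N.

Definition inG (alpha : int -> K) : Prop :=
  is_ratfun alpha \/
  exists a x, cf_expansion alpha a x /\ degs_to_infty a.

End Laurent.

(* Main.v *)
Require Import Defs.
From HB Require Import structures.
From mathcomp Require Import all_boot all_order all_algebra.
From mathcomp Require Import boolp.
From Stdlib Require Import ClassicalEpsilon.
From mathcomp Require Import ring zify.
Set Implicit Arguments. Unset Strict Implicit. Unset Printing Implicit Defensive.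
Import Order.TTheory GRing.Theory Num.Theory.
Local Open Scope ring_scope.


Section PS.
Variable K : fieldType.

Record ps := PS { pc : nat -> K }.

HB.instance Definition _ := gen_eqMixin ps.
HB.instance Definition _ := gen_choiceMixin ps.

Lemma ps_ext (f g : ps) : (forall n, pc f n = pc g n) -> f = g.
Proof.
case: f; case: g => g f /= H; congr PS; exact: functional_extensionality_dep.
Qed.

Definition ps0 := PS (fun _ => 0).
Definition psopp f := PS (fun n => - pc f n).
Definition psadd f g := PS (fun n => pc f n + pc g n).

Lemma psaddA : associative psadd.
Proof. by move=> f g h; apply: ps_ext => n /=; rewrite addrA. Qed.
Lemma psaddC : commutative psadd.
Proof. by move=> f g; apply: ps_ext => n /=; rewrite addrC. Qed.
Lemma psadd0 : left_id ps0 psadd.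
Proof. by move=> f; apply: ps_ext => n /=; rewrite add0r. Qed.
Lemma psaddN : left_inverse ps0 psopp psadd.
Proof. by move=> f; apply: ps_ext => n /=; rewrite addNr. Qed.

HB.instance Definition _ := GRing.isZmodule.Build ps psaddA psaddC psadd0 psaddN.

Definition tr (n : nat) (f : ps) : {poly K} := \poly_(i < n.+1) pc f i.
Definition ps1 := PS (fun n => (n == 0)%:R).
Definition psmul f g := PS (fun n => \sum_(i < n.+1) pc f i * pc g (n - i)).

Lemma pc_mul_tr f g m n : (n <= m)%N -> pc (psmul f g) n = (tr m f * tr m g)`_n.
Proof.
move=> le; rewrite coefM /=; apply: eq_bigr => [[i hi]] _.
rewrite /tr !coef_poly; rewrite !ltnS.
have -> : (i <= m)%N by apply: leq_trans le; rewrite -ltnS.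
by have -> : (n - i <= m)%N by apply: leq_trans (leq_subr _ _) le.
Qed.

Lemma tr_coef m f i : (i <= m)%N -> (tr m f)`_i = pc f i.
Proof. by move=> h; rewrite /tr coef_poly ltnS h. Qed.

Lemma pc_mulE f g n : pc (psmul f g) n = \sum_(i < n.+1) pc f i * pc g (n - i).
Proof. by []. Qed.

Lemma psmulA : associative psmul.
Proof.
move=> f g h; apply: ps_ext => n.
have E1 : pc (psmul f (psmul g h)) n = (tr n f * (tr n g * tr n h))`_n.
  rewrite pc_mulE coefM; apply: eq_bigr => [[i hi]] _.
  by rewrite (tr_coef _ (hi : (i <= n)%N)) (pc_mul_tr _ _ (leq_subr i n)).
have E2 : pc (psmul (psmul f g) h) n = ((tr n f * tr n g) * tr n h)`_n.
  rewrite pc_mulE coefM; apply: eq_bigr => [[i hi]] _.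
  by rewrite (tr_coef _ (leq_subr i n)) (pc_mul_tr _ _ (hi : (i <= n)%N)).
by rewrite E1 E2 mulrA.
Qed.

Lemma psmulC : commutative psmul.
Proof.
by move=> f g; apply: ps_ext => n; rewrite !(pc_mul_tr _ _ (leqnn n)) mulrC.
Qed.

Lemma tr1 n : tr n ps1 = 1.
Proof.
apply/polyP => i; rewrite /tr coef_poly coef1 /=.
by case: ifP => // /negbT; rewrite -leqNgt; case: i.
Qed.

Lemma psmul1 : left_id ps1 psmul.
Proof.
by move=> f; apply: ps_ext => n; rewrite (pc_mul_tr _ _ (leqnn n)) tr1 mul1r tr_coef.
Qed.

Lemma psmulDl : left_distributive psmul psadd.
Proof.
move=> f g h; apply: ps_ext => n /=.
by rewrite -big_split /=; apply: eq_bigr => i _; rewrite mulrDl.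
Qed.

Lemma ps1_neq0 : ps1 != ps0.
Proof. by apply/eqP => /(congr1 (fun f => pc f 0)) /= /eqP; rewrite oner_eq0. Qed.

HB.instance Definition _ := GRing.Zmodule_isComNzRing.Build ps psmulA psmulC psmul1 psmulDl ps1_neq0.


Lemma pc0 n : pc (0 : ps) n = 0. Proof. by []. Qed.
Lemma pcD (f g : ps) n : pc (f + g) n = pc f n + pc g n. Proof. by []. Qed.
Lemma pcN (f : ps) n : pc (- f) n = - pc f n. Proof. by []. Qed.
Lemma pcB (f g : ps) n : pc (f - g) n = pc f n - pc g n. Proof. by []. Qed.
Lemma pcM (f g : ps) n : pc (f * g) n = \sum_(i < n.+1) pc f i * pc g (n - i).
Proof. by []. Qed.
Lemma pc1 n : pc (1 : ps) n = (n == 0)%:R. Proof. by []. Qed.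
Lemma pcM_tr (f g : ps) m n : (n <= m)%N -> pc (f * g) n = (tr m f * tr m g)`_n.
Proof. exact: pc_mul_tr. Qed.

Lemma ps_nz (f : ps) : f != 0 -> exists m, pc f m != 0 /\ forall i, (i < m)%N -> pc f i = 0.
Proof.
move=> nz.
have ex : exists n, pc f n != 0.
  apply: contrapT => H; move/eqP: nz; apply; apply: ps_ext => n.
  by apply/eqP; apply: contrapT => Hn; apply: H; exists n; apply/negP.
have exb : exists n, (fun n => pc f n != 0) n by [].
exists (ex_minn exb); case: ex_minnP => m Hm Hmin; split => // i Hi.
case: (boolP (pc f i == 0)) => [/eqP//|Hn]; by have := Hmin i Hn; rewrite leqNgt Hi.
Qed.

Lemma ps_idom (x y : ps) : x * y = 0 -> (x == 0) || (y == 0).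
Proof.
move=> H; case: (boolP (x == 0)) => // /ps_nz [m [Hm Hm0]].
case: (boolP (y == 0)) => // /ps_nz [k [Hk Hk0]]; exfalso.
move/(congr1 (fun f => pc f (m + k))): H; rewrite pcM pc0.
have hm : (m < (m + k).+1)%N by rewrite ltnS leq_addr.
rewrite (bigD1 (Ordinal hm)) //= big1 ?addr0 ?addKn.
  by move/eqP; rewrite mulf_eq0 (negbTE Hm) (negbTE Hk).
move=> [i hi] /= /eqP Hne.
have [lt|ge] := ltnP i m; first by rewrite Hm0 ?mul0r.
rewrite Hk0 ?mulr0 //.
have gt : (m < i)%N by rewrite ltn_neqAle ge andbT eq_sym; apply/eqP => E; apply: Hne; apply: val_inj.
by rewrite ltn_subLR ?ltn_add2r // -ltnS.
Qed.

Definition psunit (x : ps) : bool := `[< exists y, y * x = 1 >].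
Definition psinv (x : ps) : ps :=
  if psunit x then epsilon (inhabits x) (fun y => y * x = 1) else x.

Lemma psmulV : {in psunit, left_inverse 1 psinv *%R}.
Proof.
move=> x H; rewrite /psinv (_ : psunit x = true) //.
by apply: (epsilon_spec (inhabits x) (fun y => y * x = 1)); apply/asboolP.
Qed.

Lemma psunitP (x y : ps) : y * x = 1 -> psunit x.
Proof. by move=> H; apply/asboolP; exists y. Qed.

Lemma psinv_out : {in [predC psunit], psinv =1 id}.
Proof. move=> x Hx; rewrite /psinv; case: ifP => // H; move: Hx; rewrite inE /= => /negP []; exact: H. Qed.

HB.instance Definition _ := GRing.ComNzRing_hasMulInverse.Build ps psmulV psunitP psinv_out.
HB.instance Definition _ := GRing.ComUnitRing_isIntegral.Build ps ps_idom.

End PS.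


Section PS2.
Variable K : fieldType.
Local Notation ps := (ps K).

Definition psC (c : K) : ps := PS (fun n => if n == 0%N then c else 0).

Lemma psC_is_zmod : zmod_morphism psC.
Proof. by move=> a b; apply: ps_ext => n; rewrite pcB /=; case: (n == 0%N); rewrite ?subr0. Qed.
HB.instance Definition _ := GRing.isZmodMorphism.Build K ps psC psC_is_zmod.

Lemma psC_is_monoid : monoid_morphism psC.
Proof.
split; first by apply: ps_ext => n; rewrite pc1 /=; case: (n == 0%N).
move=> a b; apply: ps_ext => n; rewrite pcM /=.
case: n => [|n]; first by rewrite big_ord1.
rewrite big1 // => [[i hi]] _ /=; case: i hi => [|i] hi; last by rewrite mul0r.
by rewrite subn0 mulr0.
Qed.
HB.instance Definition _ := GRing.isMonoidMorphism.Build K ps psC psC_is_monoid.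

Definition u : ps := PS (fun n => (n == 1%N)%:R).

Lemma tr_u n : tr n.+1 u = 'X.
Proof.
apply/polyP => i; rewrite /tr coef_poly coefX /=.
by case: ifP => // /negbT; rewrite -leqNgt; case: i => [|[|i]].
Qed.

Lemma pc_u_mul (f : ps) n : pc (u * f) n = if n == 0%N then 0 else pc f n.-1.
Proof.
rewrite (pcM_tr _ _ (leqnSn n)) tr_u coefXM.
case: n => [|n] //=; rewrite tr_coef // leqW //.
Qed.

Lemma pc_uX_mul m (f : ps) n : pc (u ^+ m * f) n = if (m <= n)%N then pc f (n - m) else 0.
Proof.
elim: m n => [|m IH] n; first by rewrite expr0 mul1r subn0.
rewrite exprS -mulrA pc_u_mul IH.
case: n => [|n] //=; by rewrite ltnS subSS.
Qed.

Lemma ps_low (f : ps) m : (forall i, (i < m)%N -> pc f i = 0) ->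
  f = u ^+ m * PS (fun n => pc f (n + m)).
Proof.
move=> H; apply: ps_ext => n; rewrite pc_uX_mul /=.
case: leqP => h; first by rewrite subnK.
by rewrite H.
Qed.

Lemma ps_factor (f : ps) : f != 0 -> exists m (w : ps), pc w 0 != 0 /\ f = u ^+ m * w.
Proof.
move=> /ps_nz [m [Hm H0]]; exists m, (PS (fun n => pc f (n + m))); split => //.
exact: ps_low.
Qed.

Lemma pc_mul0 (f g : ps) : pc (f * g) 0 = pc f 0 * pc g 0.
Proof. by rewrite pcM big_ord1. Qed.

Section Inv.
Variable f : ps.
Hypothesis f0 : pc f 0 != 0.
Let c := pc f 0.

Fixpoint ip (n : nat) : {poly K} :=
  match n with
  | 0 => (c^-1)%:P
  | n.+1 => ip n + (- c^-1 * (tr n.+1 f * ip n)`_n.+1) *: 'X^(n.+1)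
  end.

Lemma coefM_low (p p' q : {poly K}) i : (forall j, (j <= i)%N -> p`_j = p'`_j) ->
  (p * q)`_i = (p' * q)`_i.
Proof.
move=> H; rewrite !coefM; apply: eq_bigr => [[j hj]] _ /=; by rewrite H.
Qed.

Lemma ip_size n : (size (ip n) <= n.+1)%N.
Proof.
elim: n => [|n IH] /=; first by rewrite size_polyC; case: (_ != 0).
rewrite (leq_trans (size_polyD _ _)) // geq_max (leq_trans IH) //.
by rewrite (leq_trans (size_scale_leq _ _)) // size_polyXn.
Qed.

Lemma ip_stable n m i : (i <= n)%N -> (n <= m)%N -> (ip m)`_i = (ip n)`_i.
Proof.
move=> hi; elim: m => [|m IH]; first by rewrite leqn0 => /eqP ->.
rewrite leq_eqVlt => /orP [/eqP -> //| h].
by rewrite /= coefD coefZ coefXn (IH h) (_ : (i == m.+1) = false) ?mulr0 ?addr0 //;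
  apply/negbTE; rewrite neq_ltn (leq_ltn_trans hi h).
Qed.

Lemma ip_spec n i : (i <= n)%N -> (tr n f * ip n)`_i = (i == 0%N)%:R.
Proof.
elim: n i => [|n IH] i hi.
  rewrite leqn0 in hi; rewrite (eqP hi) coefM big_ord1 /= coefC /= tr_coef //.
  by rewrite mulfV.
rewrite /= mulrDr coefD -scalerAr coefZ coefMXn.
rewrite leq_eqVlt in hi; case/orP: hi => [/eqP ->|hi].
  rewrite ltnn subnn tr_coef // -/c.
  by rewrite !mulNr mulrAC mulVf // mul1r addrN.
rewrite hi mulr0 addr0 -IH; last by rewrite -ltnS.
apply: coefM_low => j hj; rewrite !tr_coef //.
  by apply: leq_trans hj _; rewrite -ltnS.
by apply: leq_trans hj (ltnW hi).
Qed.

Definition psinvf : ps := PS (fun n => (ip n)`_n).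

Lemma tr_psinvf n : tr n psinvf = ip n.
Proof.
apply/polyP => i; rewrite /tr coef_poly /=.
case: ltnP => h; first by rewrite (@ip_stable i n i).

by rewrite nth_default // (leq_trans (ip_size n)).
Qed.

Lemma psinvfK : psinvf * f = 1.
Proof.
apply: ps_ext => n; rewrite (pcM_tr _ _ (leqnn n)) tr_psinvf mulrC ip_spec //.
Qed.
End Inv.

Lemma ps_inv (f : ps) : pc f 0 != 0 -> exists g : ps, pc g 0 != 0 /\ g * f = 1.
Proof.
move=> H; exists (psinvf f); split; last exact: psinvfK.
apply/eqP => E; have := congr1 (fun g => pc g 0) (psinvfK H).
by rewrite pc_mul0 E mul0r pc1 => /eqP; rewrite eq_sym oner_eq0.
Qed.

End PS2.


Section LS.
Variable K : fieldType.
Local Notation ps := (ps K).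
Local Notation F := {fraction ps}.
Local Notation "x %:F" := (@FracField.tofrac ps x) .

Definition v : F := (u K)%:F.
Lemma u_neq0 : u K != 0.
Proof. by apply/eqP => /(congr1 (fun f => pc f 1)) /= /eqP; rewrite oner_eq0. Qed.
Lemma v_neq0 : v != 0.
Proof. by rewrite tofrac_eq0 u_neq0. Qed.

Lemma vX (n : nat) : v ^ (n%:Z) = ((u K) ^+ n)%:F.
Proof. by rewrite tofracXn. Qed.

Lemma vD (a b : int) : v ^ (a + b) = v ^ a * v ^ b.
Proof. exact: expfzDr v_neq0. Qed.

Definition dle (x : F) (k : int) := exists a : ps, x = a%:F * v ^ (- k).
Definition deq (x : F) (k : int) := exists a : ps, pc a 0 != 0 /\ x = a%:F * v ^ (- k).

Lemma dle0 k : dle 0 k.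
Proof. by exists 0; rewrite tofrac0 mul0r. Qed.

Lemma dleD x y k : dle x k -> dle y k -> dle (x + y) k.
Proof. by move=> [a ->] [b ->]; exists (a + b); rewrite tofracD mulrDl. Qed.

Lemma dleN x k : dle x k -> dle (- x) k.
Proof. by move=> [a ->]; exists (- a); rewrite tofracN mulNr. Qed.

Lemma dleB x y k : dle x k -> dle y k -> dle (x - y) k.
Proof. by move=> hx hy; apply: dleD => //; apply: dleN. Qed.

Lemma dleM x y k l : dle x k -> dle y l -> dle (x * y) (k + l).
Proof.
move=> [a ->] [b ->]; exists (a * b); rewrite tofracM opprD vD.
by rewrite mulrACA.
Qed.

Lemma dle_mono x k l : dle x k -> k <= l -> dle x l.
Proof.
move=> [a ->] kl; set m := `|l - k|%N; exists ((u K) ^+ m * a).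
have e : - k = m%:Z + - l.
  by rewrite /m gez0_abs ?subr_ge0 //; ring.
rewrite e vD vX tofracM; ring.
Qed.

Lemma deq_dle x k : deq x k -> dle x k.
Proof. by move=> [a [_ ->]]; exists a. Qed.

Lemma deqM x y k l : deq x k -> deq y l -> deq (x * y) (k + l).
Proof.
move=> [a [a0 ->]] [b [b0 ->]]; exists (a * b); split.
  by rewrite pc_mul0 mulf_neq0.
by rewrite tofracM opprD vD mulrACA.
Qed.

Lemma deqN x k : deq x k -> deq (- x) k.
Proof. by move=> [a [a0 ->]]; exists (- a); rewrite pcN oppr_eq0 tofracN mulNr. Qed.

Lemma deq_neq0 x k : deq x k -> x != 0.
Proof.
move=> [a [a0 ->]]; rewrite mulf_neq0 // ?expfz_neq0 ?v_neq0 // tofrac_eq0.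
by apply: contraNneq a0 => ->.
Qed.

Lemma deqV x k : deq x k -> deq x^-1 (- k).
Proof.
move=> [a [a0 ->]]; have [g [g0 ga]] := ps_inv a0.
have aF : a%:F != 0 by rewrite tofrac_eq0; apply: contraNneq a0 => ->.
exists g; split => //; rewrite invfM invr_expz; congr (_ * _).
by apply: (mulIf aF); rewrite -tofracM ga tofrac1 mulVf.
Qed.

Lemma deqD x y k : deq x k -> dle y (k - 1) -> deq (x + y) k.
Proof.
move=> [a [a0 ->]] [b ->]; exists (a + u K * b); split.
  by rewrite pcD pc_u_mul /= addr0.
rewrite tofracD mulrDl; congr (_ + _).
rewrite (_ : - (k - 1) = 1 + - k); last by ring.
by rewrite vD expr1z tofracM; ring.
Qed.

Lemma deq_dle_le x k l : deq x k -> dle x l -> k <= l.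
Proof.
move=> [a [a0 ->]] [b e]; rewrite leNgt; apply/negP => lk.
have e2 : a%:F = b%:F * v ^ (k - l).
  have := congr1 (fun z => z * v ^ k) e.
  rewrite -!mulrA -!vD addNr expr0z mulr1 => ->; congr (_ * _); congr (v ^ _).
  by rewrite addrC.
have e3 : k - l = `|k - l|%N%:Z by rewrite gtz0_abs // subr_gt0.
rewrite e3 vX -tofracM in e2; move/eqP: e2; rewrite tofrac_eq => /eqP e2.
move: a0; rewrite e2 mulrC pc_uX_mul.
by case: (`|k - l|%N) e3 => [|n] e3; [move: lk; rewrite -subr_gt0 e3 | rewrite /= eqxx].
Qed.

Lemma deq_uniq x k l : deq x k -> deq x l -> k = l.
Proof.
move=> h1 h2; apply/eqP; rewrite eq_le (deq_dle_le h1 (deq_dle h2)).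
exact: (deq_dle_le h2 (deq_dle h1)).
Qed.

Lemma dle_deq x k : dle x k -> x != 0 -> exists l, l <= k /\ deq x l.
Proof.
move=> [a ->] nz; have a0 : a != 0 by apply: contraNneq nz => ->; rewrite tofrac0 mul0r.
have [m [w [w0 ea]]] := ps_factor a0.
exists (k - m%:Z); split; first by rewrite lerBlDr lerDl.
exists w; split => //; rewrite ea tofracM -vX (_ : - (k - m%:Z) = m%:Z + - k).
  by rewrite vD; ring.
by ring.
Qed.

Lemma dle_zero x k : (forall n : nat, dle x (k - n%:Z)) -> x = 0.
Proof.
move=> H; apply/eqP; apply: contraT => nz.
have [l [lk hl]] := dle_deq (H 0%N) nz.
have [n hn] : exists n : nat, k - n%:Z < l.
  exists (`|k - l|%N.+1); rewrite ltrBlDr -ltrBlDl.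
  apply: (le_lt_trans (ler_norm _)); rewrite -(normr_id (k - l)).
  by rewrite -[`|k - l|]/((`|k - l|%N)%:Z) ltz_nat.
have := deq_dle_le hl (H n); rewrite leNgt hn //.
Qed.

End LS.

Section More.
Variable K : fieldType.
Local Notation ps := (ps K).
Local Notation "x %:F" := (@FracField.tofrac ps x).
Local Notation v := (v K).

Lemma low_dle (a : ps) (B D : nat) : (forall i, (i < B + D)%N -> pc a i = 0) ->
  dle (a%:F * v ^ (- B%:Z)) (- D%:Z).
Proof.
move=> h; rewrite (ps_low h) tofracM -vX; eexists.
rewrite mulrC mulrA -vD mulrC; congr (_ * v ^ _); lia.
Qed.

Lemma dle_low (a : ps) (B D : nat) : dle (a%:F * v ^ (- B%:Z)) (- D%:Z) ->
  forall i, (i < B + D)%N -> pc a i = 0.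
Proof.
move=> [b e] i hi.
have e2 : a%:F = (u K ^+ (B + D) * b)%:F.
  have := congr1 (fun z => z * v ^ (B%:Z)) e.
  rewrite -!mulrA -!vD addNr expr0z mulr1 => ->.
  by rewrite tofracM -vX mulrC; congr (v ^ _ * _); lia.
move/eqP: e2; rewrite tofrac_eq => /eqP ->.
by rewrite pc_uX_mul leqNgt hi.
Qed.

Lemma dle_natb (x : {fraction ps}) k : dle x k -> dle x (absz k)%:Z.
Proof. by move=> h; apply: dle_mono h _; lia. Qed.

End More.


Section Emb.
Variable K : fieldType.
Local Notation ps := (ps K).
Local Notation F := {fraction ps}.
Local Notation "x %:F" := (@FracField.tofrac ps x).
Local Notation v := (v K).

Definition t : F := v^-1.
Definition phi := (@FracField.tofrac ps) \o (@psC K).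
Definition emb (p : {poly K}) : F := (map_poly phi p).[t].

Lemma embD p q : emb (p + q) = emb p + emb q.
Proof. by rewrite /emb rmorphD hornerD. Qed.
Lemma embN p : emb (- p) = - emb p.
Proof. by rewrite /emb rmorphN hornerN. Qed.
Lemma embB p q : emb (p - q) = emb p - emb q.
Proof. by rewrite embD embN. Qed.
Lemma embM p q : emb (p * q) = emb p * emb q.
Proof. by rewrite /emb rmorphM hornerM. Qed.
Lemma embC c : emb c%:P = (psC c)%:F.
Proof. by rewrite /emb map_polyC hornerC. Qed.
Lemma emb1 : emb 1 = 1.
Proof. by rewrite /emb rmorph1 hornerC. Qed.
Lemma emb0 : emb 0 = 0.
Proof. by rewrite /emb rmorph0 hornerC. Qed.

Lemma tX (i : nat) : t ^+ i = v ^ (- (i%:Z)).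
Proof. by rewrite /t -exprz_inv. Qed.

Lemma pc_sum I (r : seq I) (P : pred I) (f : I -> ps) k :
  pc (\sum_(i <- r | P i) f i) k = \sum_(i <- r | P i) pc (f i) k.
Proof. by apply: (big_morph (fun g => pc g k)) => //= *; rewrite pcD. Qed.

Lemma pc_psum N (c : nat -> K) k :
  pc (\sum_(j < N) psC (c j) * (u K) ^+ j) k = if (k < N)%N then c k else 0.
Proof.
rewrite pc_sum.
rewrite (eq_bigr (fun j : 'I_N => if (j : nat) == k then c j else 0)).
  by rewrite -big_mkcond big_ord1_eq.
move=> j _; rewrite mulrC pc_uX_mul /=.
case: (leqP j k) => h.
  by rewrite /= subn_eq0 eqn_leq h.
by rewrite (gtn_eqF h).
Qed.

Lemma emb_rep (p : {poly K}) (n : nat) : (size p <= n.+1)%N ->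
  emb p = (\sum_(j < n.+1) psC p`_(n - j) * (u K) ^+ j)%:F * v ^ (- (n%:Z)).
Proof.
move=> sp.
have Hp : \poly_(i < n.+1) p`_i = p.
  apply/polyP => i; rewrite coef_poly; case: ltnP => // h.
  by rewrite nth_default // (leq_trans sp h).
have E1 : emb p = \sum_(i < n.+1) (psC p`_i)%:F * t ^+ i.
  rewrite -{1}Hp poly_def /emb rmorph_sum horner_sum; apply: eq_bigr => i _.
  by rewrite -mul_polyC rmorphM /= map_polyC map_polyXn hornerM hornerC hornerXn.
rewrite E1 rmorph_sum mulr_suml [RHS](reindex_inj rev_ord_inj) /=.
apply: eq_bigr => [[i hi]] _ /=.
rewrite subKn // tofracM tofracXn tX -[tofrac (u K)]/v -mulrA (_ : v ^+ (n.+1 - i.+1) = v ^ ((n.+1 - i.+1)%N%:Z)) // -vD.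
congr (_ * v ^ _); lia.
Qed.

Lemma emb_low_rep (p : {poly K}) (n : nat) : (size p <= n.+1)%N ->
  emb p = (\sum_(j < n.+1) psC p`_(n - j) * (u K) ^+ j)%:F * v ^ (- (n%:Z)) /\
  forall k, pc (\sum_(j < n.+1) psC p`_(n - j) * (u K) ^+ j) k = if (k <= n)%N then p`_(n - k) else 0.
Proof. by move=> sp; split; [exact: emb_rep | move=> k; rewrite (pc_psum _ (fun j => p`_(n - j)))]. Qed.

Lemma dle_emb (p : {poly K}) (n : nat) : (size p <= n.+1)%N -> dle (emb p) n.
Proof. by move=> sp; rewrite (emb_rep sp); eexists. Qed.

Lemma deq_emb (p : {poly K}) : p != 0 -> deq (emb p) (size p).-1.
Proof.
move=> nz; have sp : (size p <= (size p).-1.+1)%N by rewrite prednK ?size_poly_gt0.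
rewrite (emb_rep sp); eexists; split; last by [].
rewrite (pc_psum _ (fun j => p`_((size p).-1 - j))) /= subn0 -lead_coefE; by rewrite lead_coef_eq0.
Qed.

Lemma dle_const c : dle (psC c)%:F 0.
Proof. by exists (psC c); rewrite oppr0 expr0z mulr1. Qed.

Lemma deq_const c : c != 0 -> deq (psC c)%:F 0.
Proof. by move=> nz; exists (psC c); rewrite oppr0 expr0z mulr1. Qed.

Lemma ppart_ex x (n : nat) : dle x n -> exists c : {poly K},
  (size c <= n.+1)%N /\ dle (x - emb c) (-1).
Proof.
move=> [a ->]; exists (\poly_(i < n.+1) pc a (n - i)); split; first exact: size_poly.
rewrite (emb_rep (size_poly _ _)).
set T := \sum_(j < n.+1) _.
have hT : forall k, (k < n.+1)%N -> pc (a - T) k = 0.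
  move=> k hk; rewrite pcB /T (pc_psum _ (fun j => (\poly_(i < n.+1) pc a (n - i))`_(n - j))) hk coef_poly (_ : (n - k < n.+1)%N) ?ltnS ?leq_subr //.
  by rewrite subKn ?subrr // -ltnS.
rewrite -mulrBl -tofracB (ps_low hT) tofracM -vX.
eexists; rewrite mulrC mulrA -vD mulrC; congr (_ * v ^ _); lia.
Qed.

End Emb.


Section Coef.
Variable K : fieldType.
Local Notation ps := (ps K).
Local Notation F := {fraction ps}.
Local Notation "x %:F" := (@FracField.tofrac ps x).
Local Notation v := (v K).

Definition coefN (N : nat) (a : ps) (z : int) : K :=
  if z <= N%:Z then pc a `|N%:Z - z|%N else 0.

Lemma coefN_shift N d a z : coefN N a z = coefN (N + d) ((u K) ^+ d * a) z.
Proof.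
rewrite /coefN pc_uX_mul.
case: (lerP z N%:Z) => h1.
  have -> : z <= (N + d)%N%:Z by lia.
  have -> : (d <= `|(N + d)%N%:Z - z|%N)%N by lia.
  congr (pc a _); lia.
case: (lerP z (N + d)%N%:Z) => // h2.
by have -> : (d <= `|(N + d)%N%:Z - z|%N)%N = false by lia.
Qed.

Lemma rep_same N M a b : a%:F * v ^ (- N%:Z) = b%:F * v ^ (- M%:Z) -> (N <= M)%N ->
  b = (u K) ^+ (M - N) * a.
Proof.
move=> e le; apply/eqP; rewrite -tofrac_eq tofracM -vX.
have := congr1 (fun z => z * v ^ (M%:Z)) e; rewrite -!mulrA -!vD addNr expr0z mulr1.
move=> <-; rewrite mulrC; apply/eqP; congr (v ^ _ * _); lia.
Qed.

Lemma coefN_same N M a b : a%:F * v ^ (- N%:Z) = b%:F * v ^ (- M%:Z) ->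
  coefN N a =1 coefN M b.
Proof.
move=> e z; case: (leqP N M) => le.
  by rewrite (rep_same e le) (coefN_shift N (M - N)) subnKC.
by rewrite (rep_same (esym e) (ltnW le)) (coefN_shift M (N - M)) subnKC // ltnW.
Qed.

Definition rep (x : F) : nat * ps :=
  epsilon (inhabits (0%N, 0 : ps)) (fun r : nat * ps => x = r.2%:F * v ^ (- (r.1)%:Z)).

Definition L2f (x : F) : int -> K := coefN (rep x).1 (rep x).2.

Lemma L2fE x (N : nat) a : x = a%:F * v ^ (- N%:Z) -> L2f x =1 coefN N a.
Proof.
move=> e; have := epsilon_spec (inhabits (0%N, 0 : ps))
  (fun r : nat * ps => x = r.2%:F * v ^ (- (r.1)%:Z)) (ex_intro _ (N, a) e).
rewrite -/(rep x) => e2; rewrite /L2f; apply: coefN_same; by rewrite -e2.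
Qed.

Lemma dle_nat x (N : nat) : dle x N%:Z -> exists a, x = a%:F * v ^ (- N%:Z).
Proof. by []. Qed.

Lemma L2f_bounded x (N : nat) : dle x N%:Z -> lbounded (L2f x) N.
Proof.
move=> [a e] z hz; rewrite (L2fE e) /coefN.
by have -> : (z <= N%:Z) = false by lia.
Qed.

Lemma L2f_laurent x (N : nat) : dle x N%:Z -> is_laurent (L2f x).
Proof. by move=> h; exists N; apply: L2f_bounded h. Qed.

Lemma lmulN_coef N a b z :
  lmulN N (coefN N a) (coefN N b) z = coefN (N + N) (a * b) z.
Proof.
rewrite /lmulN /coefN.
case: (lerP z (N + N)%N%:Z) => hz.
  have -> : `|(2 * N + 1)%N%:Z - z|%N = (`|(N + N)%N%:Z - z|%N).+1 by lia.
  rewrite pcM; apply: eq_bigr => [[k hk]] _ /=.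
  have -> : N%:Z - k%:Z <= N%:Z by lia.
  have -> : z - N%:Z + k%:Z <= N%:Z by lia.
  congr (pc a _ * pc b _); lia.
rewrite big1 // => [[k hk]] _ /=.
have -> : z - N%:Z + k%:Z <= N%:Z = false by lia.
by rewrite mulr0.
Qed.

Lemma lmul_L2f x y (N : nat) : dle x N%:Z -> dle y N%:Z ->
  lmul_eq (L2f x) (L2f y) (L2f (x * y)).
Proof.
move=> hx hy; exists N; split; [exact: L2f_bounded hx | split; first exact: L2f_bounded hy].
move: hx hy => [a ea] [b eb] z.
have exy : x * y = (a * b)%:F * v ^ (- (N + N)%N%:Z).
  rewrite ea eb tofracM (_ : - (N + N)%N%:Z = - N%:Z + - N%:Z); last by lia.
  by rewrite vD; ring.
rewrite (L2fE exy) -lmulN_coef /lmulN; apply: eq_bigr => k _.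
by rewrite (L2fE ea) (L2fE eb).
Qed.

Lemma L2fD x y (N : nat) : dle x N%:Z -> dle y N%:Z -> L2f (x + y) =1 L2f x \+ L2f y.
Proof.
move=> [a ea] [b eb] z /=.
have e : x + y = (a + b)%:F * v ^ (- N%:Z) by rewrite ea eb tofracD mulrDl.
rewrite (L2fE e) (L2fE ea) (L2fE eb) /coefN.
by case: ifP; rewrite ?pcD ?addr0.
Qed.

Lemma L2fB x y (N : nat) : dle x N%:Z -> dle y N%:Z -> L2f (x - y) =1 L2f x \- L2f y.
Proof.
move=> [a ea] [b eb] z /=.
have e : x - y = (a - b)%:F * v ^ (- N%:Z) by rewrite ea eb tofracB mulrBl.
rewrite (L2fE e) (L2fE ea) (L2fE eb) /coefN.
by case: ifP; rewrite ?pcB ?subr0.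
Qed.

Lemma L2f_emb (p : {poly K}) : L2f (emb p) =1 polyL p.
Proof.
have sp : (size p <= (size p).+1)%N by [].
have [e1 e2] := emb_low_rep sp.
move=> z; rewrite (L2fE e1) /coefN e2 /polyL.
case: z => [m|m].
  case: (leqP m (size p)) => h.
    have -> : m%:Z <= (size p)%:Z by lia.
    have -> : (`|(size p)%:Z - m%:Z|%N <= size p)%N by lia.
    congr (p`_ _); lia.
  have -> : m%:Z <= (size p)%:Z = false by lia.
  by rewrite nth_default // ltnW.
have -> : Negz m <= (size p)%:Z by lia.
by have -> : (`|(size p)%:Z - Negz m|%N <= size p)%N = false by lia.
Qed.

Lemma L2f_low x : dle x (-1) -> forall m : nat, L2f x m%:Z = 0.
Proof.
move=> [b eb] m.
have e : x = (u K * b)%:F * v ^ (- 0%N%:Z).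
  rewrite eb tofracM (_ : - -1 = 1) // expr1z oppr0 expr0z mulr1 mulrC //.
rewrite (L2fE e) /coefN; case: m => [|m].
  by rewrite lexx (_ : `|0%N%:Z - 0%N%:Z|%N = 0%N) // pc_u_mul.
by have -> : m.+1%:Z <= 0%N%:Z = false by lia.
Qed.

Definition f2L (al : int -> K) (N : nat) : F :=
  (PS (fun k : nat => al (N%:Z - k%:Z)))%:F * v ^ (- N%:Z).

Lemma L2f_f2L al N : lbounded al N -> L2f (f2L al N) =1 al.
Proof.
move=> hb z; rewrite (L2fE (erefl _)) /coefN /=.
case: lerP => h; first by congr al; lia.
by rewrite hb.
Qed.

Lemma dle_f2L al N : dle (f2L al N) N%:Z.
Proof. by eexists. Qed.

Lemma L2f_inj x y (N : nat) : dle x N%:Z -> dle y N%:Z -> L2f x =1 L2f y -> x = y.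
Proof.
move=> hx hy e; apply/eqP; rewrite -subr_eq0; apply/eqP.
have [c ec] := dleB hx hy.
have h0 : forall z, coefN N c z = 0.
  by move=> z; rewrite -(L2fE ec) (L2fB hx hy) /= e subrr.
rewrite ec (_ : c = 0) ?tofrac0 ?mul0r //; apply: ps_ext => k.
have := h0 (N%:Z - k%:Z); rewrite /coefN.
have -> : N%:Z - k%:Z <= N%:Z by lia.
by have -> : absz (N%:Z - (N%:Z - k%:Z))%R = k by lia.
Qed.

End Coef.


Section Rat.
Variable K : fieldType.
Local Notation ps := (ps K).
Local Notation F := {fraction ps}.
Local Notation "x %:F" := (@FracField.tofrac ps x).
Local Notation v := (v K).

Lemma lbounded_ext (f g : int -> K) N : f =1 g -> lbounded f N -> lbounded g N.
Proof. by move=> e h z hz; rewrite -e h. Qed.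

Lemma lmul_eq_ext (f g h f' g' h' : int -> K) : f =1 f' -> g =1 g' -> h =1 h' ->
  lmul_eq f g h -> lmul_eq f' g' h'.
Proof.
move=> ef eg eh [N [hf [hg hh]]]; exists N; split; first exact: lbounded_ext hf.
split; first exact: lbounded_ext hg.
move=> n; rewrite -eh hh /lmulN; apply: eq_bigr => k _; by rewrite ef eg.
Qed.

Lemma dle_emb_any (p : {poly K}) : @dle K (emb p) (size p)%:Z.
Proof. exact: dle_emb. Qed.

Lemma dle_nat_mono (x : F) (N M : nat) : dle x N%:Z -> (N <= M)%N -> dle x M%:Z.
Proof. by move=> h le; apply: dle_mono h _; rewrite lez_nat. Qed.

Lemma ratfun_of (al : int -> K) (N0 : nat) (p q : {poly K}) :
  lbounded al N0 -> q != 0 -> f2L al N0 * emb q = emb p -> is_ratfun al.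
Proof.
move=> hb qn e; exists p, q; split => //.
set M := maxn N0 (size q).
have h1 : dle (emb q) M%:Z by apply: dle_nat_mono (dle_emb_any q) (leq_maxr _ _).
have h2 : dle (f2L al N0) M%:Z by apply: dle_nat_mono (dle_f2L al N0) (leq_maxl _ _).
apply: lmul_eq_ext (lmul_L2f h1 h2).
- exact: L2f_emb.
- exact: L2f_f2L.
- by move=> z; rewrite mulrC e L2f_emb.
Qed.

End Rat.


Section Gen.
Variable L : fieldType.
Lemma gA (W Y Q r : L) : Q != 0 -> ((W - Y) / Q - r) * Q + Y = W - r * Q.
Proof. by move=> h; field. Qed.
Lemma gB (a b c d : L) : b != 0 -> d != 0 -> a / b - c / d = (a * d - c * b) / (b * d).
Proof. by move=> h1 h2; field; apply/andP. Qed.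
Lemma gC (e n Q : L) : e != 0 -> n != 0 -> Q != 0 -> n = e / ((e / (n * Q)) * Q).
Proof. by move=> h1 h2 h3; field; rewrite h1 h2 h3. Qed.
Lemma gD (e n W Q Q2 r : L) : W != 0 -> Q != 0 -> Q2 != 0 -> n = e / (W * Q) ->
  Q2 = W - r * Q -> n - e / (Q2 * Q) = - (e * r) / (W * Q2).
Proof. move=> h1 h2 h3 -> e2; subst Q2; field; by rewrite h1 h2 h3. Qed.
Lemma gE (a b c d : L) : b != 0 -> a != 0 -> (c / a + d / b) * (a * b) = c * b + d * a.
Proof. by move=> h1 h2; field; apply/andP. Qed.
End Gen.

Section Constr.
Variable K : fieldType.
Local Notation ps := (ps K).
Local Notation F := {fraction ps}.
Local Notation "x %:F" := (@FracField.tofrac ps x).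
Local Notation v := (v K).

Variable al : int -> K.
Variable N0 : nat.
Hypothesis hb : lbounded al N0.
Hypothesis hirr : ~ is_ratfun al.
Variable A0 : {poly K}.
Hypothesis hA0 : dle (f2L al N0 - emb A0) (-1).

Let aF := f2L al N0.

Record sm := Sm { sP : {poly K}; sQ : {poly K}; sP' : {poly K}; sQ' : {poly K} }.

Definition ratv (X : sm) : F := emb (sP X) / emb (sQ X).
Definition eta (s : sm * sm) := aF - ratv s.1 - ratv s.2.
Definition epsp (X : sm) := sP' X * sQ X - sP X * sQ' X.
Definition Wof s := emb (epsp s.1) / (eta s * emb (sQ s.1)).
Definition Zof s := (Wof s - emb (sQ' s.1)) / emb (sQ s.1).
Definition cof s := epsilon (inhabits 0) (fun c => dle (Zof s - emb c) (-1)).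
Definition mv X c := Sm (c * sP X + sP' X) (c * sQ X + sQ' X) (sP X) (sQ X).
Definition step s := (s.2, mv s.1 (cof s)).
Fixpoint state k := if k is k'.+1 then step (state k') else (Sm A0 1 1 0, Sm 0 1 1 0).

Definition qd (X : sm) : int := ((size (sQ X)).-1)%:Z.
Definition valid (X : sm) := sQ X != 0 /\ dle (emb (sQ' X)) (qd X - 1) /\
  exists e : K, e != 0 /\ epsp X = e%:P.

Definition Inv k := valid (state k).1 /\ valid (state k).2 /\
  exists H : int, deq (eta (state k)) (- H) /\ k.+1%:Z <= H - 2 * qd (state k).1 /\
    1 <= H - 2 * qd (state k).2.

Lemma emb_neq0 (p : {poly K}) : p != 0 -> emb p != 0.
Proof. by move=> h; apply: deq_neq0 (deq_emb h). Qed.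

Lemma deq_embq (p : {poly K}) : p != 0 -> deq (emb p) ((size p).-1)%:Z.
Proof. exact: deq_emb. Qed.

Lemma eta_neq0 s : sQ s.1 != 0 -> sQ s.2 != 0 -> eta s != 0.
Proof.
move=> h1 h2; apply/negP => /eqP e; apply: hirr.
apply: (@ratfun_of _ _ N0 (sP s.1 * sQ s.2 + sP s.2 * sQ s.1) (sQ s.1 * sQ s.2)) => //.
  by rewrite mulf_neq0.
have e2 : aF = ratv s.1 + ratv s.2 by apply/eqP; rewrite -subr_eq0 opprD addrA; apply/eqP; exact: e.
rewrite -/aF e2 /ratv embD !embM.
have := emb_neq0 h1; have := emb_neq0 h2.
move: (emb (sQ s.1)) (emb (sQ s.2)) (emb (sP s.1)) (emb (sP s.2)) => a b c d na nb.
by apply: gE.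
Qed.

Lemma Inv0 : Inv 0.
Proof.
split; [|split].
- split; first exact: oner_neq0.
  split; first by rewrite emb0; apply: dle0.
  by exists 1; split; [exact: oner_neq0 | rewrite /epsp /= mulr1 mulr0 subr0].
- split; first exact: oner_neq0.
  split; first by rewrite emb0; apply: dle0.
  by exists 1; split; [exact: oner_neq0 | rewrite /epsp /= mulr1 mulr0 subr0].
have e : eta (state 0) = aF - emb A0.
  by rewrite /eta /ratv /= emb1 emb0 !divr1 subr0.
have nz : eta (state 0) != 0 by apply: eta_neq0; exact: oner_neq0.
have h0 : dle (eta (state 0)) (-1) by rewrite e.
have [l [hl dl]] := dle_deq h0 nz.
have q1 : qd (Sm A0 1 1 0) = 0 by rewrite /qd /= size_poly1.
have q2 : qd (Sm 0 1 1 0) = 0 by rewrite /qd /= size_poly1.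
exists (- l); rewrite opprK /= q1 q2; split => //; lia.
Qed.


Lemma deq_epsp X : (exists e : K, e != 0 /\ epsp X = e%:P) -> deq (emb (epsp X)) 0.
Proof. by move=> [e [e0 ->]]; rewrite embC; apply: deq_const. Qed.

Lemma qd_emb X : sQ X != 0 -> deq (emb (sQ X)) (qd X).
Proof. by move=> h; apply: deq_embq. Qed.

Lemma step_lemma k : Inv k -> Inv k.+1 /\
  k.+1%:Z <= ((size (cof (state k))).-1)%:Z /\
  qd (mv (state k).1 (cof (state k))) = qd (state k).1 + ((size (cof (state k))).-1)%:Z /\
  deq (ratv (mv (state k).1 (cof (state k))) - ratv (state k).1)
      (- (qd (state k).1 + qd (mv (state k).1 (cof (state k))))).
Proof.
rewrite /Inv; have Sk : state k.+1 = step (state k) by [].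
case E: (state k) Sk => [X Y] Sk /=.
move=> [[hQ [hQ' heps]] [vY [H [dH [h1 h2]]]]].
set q := qd X.
set Qe := emb (sQ X).
have dQ : deq Qe q by apply: qd_emb.
have dE := deq_epsp heps.
have etanz : eta (X, Y) != 0 by apply: deq_neq0 dH.
have dW : deq (Wof (X, Y)) (H - q).
  have := deqM dE (deqV (deqM dH dQ)); rewrite /Wof /=.
  by congr deq; ring.
have dZ : deq (Zof (X, Y)) (H - q - q).
  have dWQ : deq (Wof (X, Y) - emb (sQ' X)) (H - q).
    apply: deqD dW _; apply: dleN; apply: dle_mono hQ' _; rewrite -/q; lia.
  by have := deqM dWQ (deqV dQ).
set c := cof (X, Y).
have hc : dle (Zof (X, Y) - emb c) (-1).
  rewrite /c /cof; apply: (epsilon_spec (inhabits 0) (fun c => dle (Zof (X, Y) - emb c) (-1))).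
  have hd : dle (Zof (X, Y)) (absz (H - q - q)%R)%:Z.
    have -> : (absz (H - q - q)%R)%:Z = H - q - q by lia.
    exact: deq_dle dZ.
  by have [c0 [_ h]] := ppart_ex hd; exists c0.
set r := Zof (X, Y) - emb c.
have ec : emb c = Zof (X, Y) - r by rewrite /r opprB addrC subrK.
have dc : deq (emb c) (H - q - q).
  rewrite ec; apply: deqD dZ _; apply: dleN; apply: dle_mono hc _; lia.
have cnz : c != 0 by apply: contraTneq (deq_neq0 dc) => ->; rewrite emb0 eqxx.
have sc : ((size c).-1)%:Z = H - q - q by apply: deq_uniq (deq_embq cnz) dc.
set Q2 := c * sQ X + sQ' X.
have eQ2 : emb Q2 = Wof (X, Y) - r * Qe.
  rewrite /Q2 embD embM ec /Zof /= -/Qe; apply: gA.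
  exact: deq_neq0 dQ.
have dQ2 : deq (emb Q2) (H - q).
  rewrite eQ2; apply: deqD dW _; apply: dleN; apply: dle_mono (dleM hc (deq_dle dQ)) _; lia.
have Q2nz : Q2 != 0 by apply: contraTneq (deq_neq0 dQ2) => ->; rewrite emb0 eqxx.
have qQ2 : qd (mv X c) = H - q by apply: (deq_uniq (@qd_emb (mv X c) Q2nz) dQ2).
have incr : ratv (mv X c) - ratv X = emb (epsp X) / (emb Q2 * Qe).
  rewrite /ratv /= gB ?(deq_neq0 dQ2) ?(deq_neq0 dQ) //.
  rewrite -!embM -embB; congr (emb _ / _); rewrite /epsp /Q2; ring.
have eta1 : eta (state k.+1) = eta (X, Y) - (ratv (mv X c) - ratv X).
  by rewrite Sk /step /eta /=; ring.
have eta1' : eta (state k.+1) = - (emb (epsp X) * r) / (Wof (X, Y) * emb Q2).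
  rewrite eta1 incr; apply: gD (deq_neq0 dW) (deq_neq0 dQ) (deq_neq0 dQ2) _ eQ2.
  by rewrite /Wof /=; apply: gC; [exact: deq_neq0 dE | exact: etanz | exact: deq_neq0 dQ].
have dle1 : dle (eta (state k.+1)) (-1 - (H - q) - (H - q)).
  rewrite eta1' mulNr; apply: dleN.
  have := dleM (dleM (deq_dle dE) hc) (deq_dle (deqV (deqM dW dQ2))).
  by congr dle; ring.
have vX2 : valid (mv X c).
  split => //; split.
    by apply: dle_mono (deq_dle dQ) _; rewrite qQ2 -/q; lia.
  move: heps => [e [e0 he]]; exists (- e); split; first by rewrite oppr_eq0.
  by rewrite /epsp /= polyCN -he /epsp; ring.
have nz1 : eta (state k.+1) != 0.
  by rewrite Sk; apply: eta_neq0 => /=; [case: vY | case: vX2].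
have [l [hl dl]] := dle_deq dle1 nz1.
rewrite E /=; split.
  split => //; split => //.
  exists (- l); rewrite opprK; split; first by rewrite Sk in dl.
  rewrite qQ2; move: h1 h2 hl; rewrite -/q; lia.
split; first by rewrite sc; move: h1; rewrite -/q; lia.
split; first by rewrite qQ2 sc; lia.
rewrite qQ2 incr; have := deqM dE (deqV (deqM dQ2 dQ)); congr deq; rewrite -/q; ring.
Qed.

End Constr.


Section Gen2.
Variable L : fieldType.
Lemma gF (Q P x : L) : Q != 0 -> Q * x - P = Q * (x - P / Q).
Proof. by move=> h; field. Qed.
Lemma gG (e e' c : L) : e != 0 -> - e' / e - c = - (e' + c * e) / e.
Proof. by move=> h; field. Qed.
Lemma gH (e e2 : L) : e != 0 -> e2 != 0 -> (- e2 / e) * (- e / e2) = 1.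
Proof. by move=> h1 h2; field; apply/andP. Qed.
Lemma gI (e : L) : e != 0 -> e * (- (-1) / e) = 1.
Proof. by move=> h; field. Qed.
End Gen2.

Section Summand.
Variable K : fieldType.
Local Notation ps := (ps K).
Local Notation F := {fraction ps}.
Local Notation "x %:F" := (@FracField.tofrac ps x).
Local Notation v := (v K).

Variable X : nat -> sm K.
Variable c : nat -> {poly K}.
Variable A : {poly K}.
Variable B : nat.
Hypothesis hX0 : X 0%N = Sm A 1 1 0.
Hypothesis hA : dle (emb A) B%:Z.
Hypothesis hmv : forall n, X n.+1 = mv (X n) (c n).
Hypothesis hval : forall n, valid (X n).
Hypothesis hq : forall n, qd (X n.+1) = qd (X n) + ((size (c n)).-1)%:Z.
Hypothesis hc : forall n, n.+1%:Z <= ((size (c n)).-1)%:Z.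
Hypothesis hinc : forall n, deq (ratv (X n.+1) - ratv (X n)) (- (qd (X n) + qd (X n.+1))).

Definition D n := qd (X n) + qd (X n.+1).

Lemma qd0 : qd (X 0%N) = 0.
Proof. by rewrite hX0 /qd /= size_poly1. Qed.

Lemma qd_ge n : n%:Z <= qd (X n).
Proof.
elim: n => [|n IH]; first by rewrite qd0.
rewrite hq; have := hc n; lia.
Qed.

Lemma D_ge n : n.+1%:Z <= D n.
Proof. rewrite /D hq; have := hc n; have := qd_ge n; lia. Qed.

Lemma D_mono n m : (n <= m)%N -> D n <= D m.
Proof.
elim: m => [|m IH]; first by rewrite leqn0 => /eqP ->.
rewrite leq_eqVlt => /orP [/eqP -> //|h].
apply: le_trans (IH h) _; rewrite /D !hq; have := hc m.+1; have := hc m; lia.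
Qed.

Lemma ratv_tail n m : (n <= m)%N -> dle (ratv (X m) - ratv (X n)) (- D n).
Proof.
elim: m => [|m IH]; first by rewrite leqn0 => /eqP ->; rewrite subrr; apply: dle0.
rewrite leq_eqVlt => /orP [/eqP -> |h]; first by rewrite subrr; apply: dle0.
have -> : ratv (X m.+1) - ratv (X n) = (ratv (X m.+1) - ratv (X m)) + (ratv (X m) - ratv (X n)).
  by ring.
apply: dleD (IH h); apply: dle_mono (deq_dle (hinc m)) _.
have := @D_mono n m h; rewrite /D; lia.
Qed.

Lemma ratv0 : ratv (X 0%N) = emb A.
Proof. by rewrite /ratv hX0 /= emb1 divr1. Qed.

Lemma ratv_dle n : dle (ratv (X n)) B%:Z.
Proof.
have -> : ratv (X n) = (ratv (X n) - ratv (X 0%N)) + emb A by rewrite ratv0; ring.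
apply: dleD hA; apply: dle_mono (ratv_tail (leq0n n)) _; have := D_ge 0; lia.
Qed.

Definition sa n : ps := epsilon (inhabits 0) (fun a => ratv (X n) = a%:F * v ^ (- B%:Z)).
Lemma saE n : ratv (X n) = (sa n)%:F * v ^ (- B%:Z).
Proof.
rewrite /sa; apply: (epsilon_spec (inhabits 0) (fun a => ratv (X n) = a%:F * v ^ (- B%:Z))).
exact: ratv_dle.
Qed.

Lemma sa_agree n m i : (n <= m)%N -> (i < B + absz (D n))%N -> pc (sa m) i = pc (sa n) i.
Proof.
move=> nm hi; apply/eqP; rewrite -subr_eq0; apply/eqP; rewrite -pcB.
apply: (@dle_low _ _ B (absz (D n))) hi.
rewrite tofracB mulrBl -!saE.
have -> : - (absz (D n))%:Z = - D n by have := D_ge n; lia.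
exact: ratv_tail.
Qed.

Definition slim : ps := PS (fun i => pc (sa i) i).
Definition Lim : F := slim%:F * v ^ (- B%:Z).

Lemma Lim_tail n : dle (Lim - ratv (X n)) (- D n).
Proof.
have -> : - D n = - (absz (D n))%:Z by have := D_ge n; lia.
rewrite saE /Lim -mulrBl -tofracB; apply: low_dle => i hi.
rewrite pcB /=; apply/eqP; rewrite subr_eq0; apply/eqP.
case: (leqP n i) => h; first by apply: sa_agree.
symmetry; apply: sa_agree; first exact: ltnW.
have := D_ge i; lia.
Qed.

Lemma Lim_deq n : deq (Lim - ratv (X n)) (- D n).
Proof.
have -> : Lim - ratv (X n) = (ratv (X n.+1) - ratv (X n)) + (Lim - ratv (X n.+1)) by ring.
apply: deqD (hinc n) _; apply: dle_mono (Lim_tail n.+1) _.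
rewrite /D; have := hq n.+1; have := hq n; have := hc n; have := hc n.+1; lia.
Qed.


Lemma Qnz n : sQ (X n) != 0.
Proof. by case: (hval n). Qed.

Definition eb n := emb (sQ (X n)) * Lim - emb (sP (X n)).
Definition ebp n := emb (sQ' (X n)) * Lim - emb (sP' (X n)).

Lemma eb_deq n : deq (eb n) (- qd (X n.+1)).
Proof.
rewrite /eb gF; last exact: emb_neq0 (Qnz n).
have := deqM (qd_emb (Qnz n)) (Lim_deq n); rewrite /D; congr deq; ring.
Qed.

Lemma eb_nz n : eb n != 0.
Proof. exact: deq_neq0 (eb_deq n). Qed.

Lemma ebp_succ n : ebp n.+1 = eb n.
Proof. by rewrite /ebp /eb hmv. Qed.

Lemma eb_succ n : eb n.+1 = emb (c n) * eb n + ebp n.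
Proof. by rewrite /eb /ebp hmv /= !embD !embM; ring. Qed.

Lemma ebp0 : ebp 0%N = -1.
Proof. by rewrite /ebp hX0 /= emb0 emb1 mul0r sub0r. Qed.

Lemma deq1 : deq (1 : F) 0.
Proof. exists 1; split; first by rewrite pc1 oner_eq0. by rewrite tofrac1 oppr0 expr0z mulr1. Qed.

Lemma ebp_deq n : deq (ebp n) (- qd (X n)).
Proof.
case: n => [|n]; first by rewrite ebp0 qd0; apply: deqN; exact: deq1.
by rewrite ebp_succ; apply: eb_deq.
Qed.

Definition yv n : F := - ebp n / eb n.
Definition xF n : F := if n is m.+1 then yv m else Lim.
Definition aP n : {poly K} := if n is m.+1 then c m else A.

Lemma yv_deq n : deq (yv n) (((size (c n)).-1)%:Z).
Proof.
have := deqM (deqN (ebp_deq n)) (deqV (eb_deq n)); rewrite /yv; congr deq.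
rewrite hq; ring.
Qed.

Lemma xF_sub n : xF n - emb (aP n) = if n is m.+1 then - eb n / eb m else eb 0%N.
Proof.
case: n => [|m] /=; first by rewrite /eb hX0 /= emb1 mul1r.
by rewrite /yv gG ?eb_nz // eb_succ addrC.
Qed.

Lemma xF_sub_dle n : dle (xF n - emb (aP n)) (-1).
Proof.
rewrite xF_sub; case: n => [|m].
  apply: dle_mono (deq_dle (eb_deq 0)) _; rewrite hq qd0; have := hc 0; lia.
have := deqM (deqN (eb_deq m.+1)) (deqV (eb_deq m)).
move/deq_dle; rewrite mulNr => h; apply: dle_mono h _.
rewrite (hq m.+1); have := hc m.+1; lia.
Qed.

Lemma xF_prod n : (xF n - emb (aP n)) * xF n.+1 = 1.
Proof.
rewrite xF_sub; case: n => [|m] /=.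
  by rewrite /yv ebp0 gI // eb_nz.
by rewrite /yv ebp_succ gH // eb_nz.
Qed.

Lemma xF_dle n : exists N : nat, dle (xF n) N%:Z.
Proof.
case: n => [|m] /=; first by exists B; rewrite /Lim; eexists.
by exists (size (c m)).-1; apply: deq_dle (yv_deq m).
Qed.

Lemma dle_common (x y : F) k l : dle x k -> dle y l -> exists N : nat, dle x N%:Z /\ dle y N%:Z.
Proof.
move=> hx hy; exists (maxn (absz k) (absz l)); split.
  by apply: dle_mono hx _; lia.
by apply: dle_mono hy _; lia.
Qed.

Lemma Lim_inG : inG (L2f Lim).
Proof.
right; exists aP, (fun n => L2f (xF n)); split; last first.
  move=> M; exists M.+1 => n hn; case: n hn => [|m] hn //=.
  have := hc m; move: ((size (c m)).-1) => s; lia.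
split; first by [].
move=> n; split.
  by have [N hN] := xF_dle n; apply: L2f_laurent hN.
split.
  move=> m hm.
  have [N [h1 h2]] := dle_common (dle_emb_any (aP n)) (xF_sub_dle n).
  have -> : xF n = emb (aP n) + (xF n - emb (aP n)) by ring.
  rewrite (L2fD h1 h2) /= L2f_emb.
  case: m hm => [m|m] // _; by rewrite (L2f_low (xF_sub_dle n)) addr0.
have [N1 h1] := xF_dle n.+1.
have [N [h2 h3]] := dle_common (xF_sub_dle n) h1.
apply: lmul_eq_ext (lmul_L2f h2 h3).
- have [N2 h6] := xF_dle n.
  have [N' [h4 h5]] := dle_common h6 (dle_emb_any (aP n)).
  by move=> z; rewrite (L2fB h4 h5) /= L2f_emb.
- by [].
- by move=> z; rewrite xF_prod -L2f_emb emb1.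
Qed.

End Summand.


Section Main.
Variable K : fieldType.
Local Notation ps := (ps K).
Local Notation F := {fraction ps}.
Local Notation "x %:F" := (@FracField.tofrac ps x).
Local Notation v := (v K).

Variable al : int -> K.
Variable N0 : nat.
Hypothesis hb : lbounded al N0.
Hypothesis hirr : ~ is_ratfun al.
Variable A0 : {poly K}.
Hypothesis hA0 : dle (f2L al N0 - emb A0) (-1).

Local Notation st := (state al N0 A0).

Lemma Inv_all k : Inv al N0 A0 k.
Proof.
elim: k => [|k IH]; first exact (Inv0 hb hirr hA0).
by case: (step_lemma hb hirr IH).
Qed.

Lemma st_succ k : st k.+1 = ((st k).2, mv (st k).1 (cof al N0 (st k))).
Proof. by []. Qed.

Definition Xb n := (st (n.*2)).1.
Definition cb n := cof al N0 (st (n.*2)).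
Definition Xg n := (st (n.*2)).2.
Definition cg n := cof al N0 (st (n.*2).+1).

Lemma Xb_mv n : Xb n.+1 = mv (Xb n) (cb n).
Proof. by rewrite /Xb doubleS !st_succ. Qed.

Lemma Xg_mv n : Xg n.+1 = mv (Xg n) (cg n).
Proof. by rewrite /Xg /cg doubleS !st_succ. Qed.

Lemma Xg_alt n : Xg n = (st (n.*2).+1).1.
Proof. by rewrite st_succ. Qed.

Lemma facts k :
  k.+1%:Z <= ((size (cof al N0 (st k))).-1)%:Z /\
  qd (mv (st k).1 (cof al N0 (st k))) = qd (st k).1 + ((size (cof al N0 (st k))).-1)%:Z /\
  deq (ratv (mv (st k).1 (cof al N0 (st k))) - ratv (st k).1)
      (- (qd (st k).1 + qd (mv (st k).1 (cof al N0 (st k))))).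
Proof. by case: (step_lemma hb hirr (Inv_all k)). Qed.

Lemma sum_b : exists Lb : F, dle Lb (size A0)%:Z /\ inG (L2f Lb) /\
  forall n, dle (Lb - ratv (Xb n)) (- n.+1%:Z).
Proof.
have hX0 : Xb 0 = Sm A0 1 1 0 by [].
have hA : dle (emb A0) (size A0)%:Z by apply: dle_emb_any.
have hval : forall n, valid (Xb n) by move=> n; case: (Inv_all n.*2).
have hq : forall n, qd (Xb n.+1) = qd (Xb n) + ((size (cb n)).-1)%:Z.
  by move=> n; rewrite Xb_mv; case: (facts n.*2) => _ [].
have hc : forall n, n.+1%:Z <= ((size (cb n)).-1)%:Z.
  move=> n; case: (facts n.*2) => h _; apply: le_trans h; rewrite -addnn; lia.
have hinc : forall n, deq (ratv (Xb n.+1) - ratv (Xb n)) (- (qd (Xb n) + qd (Xb n.+1))).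
  by move=> n; rewrite Xb_mv; case: (facts n.*2) => _ [].
exists (Lim Xb (size A0)); split; first by rewrite /Lim; eexists.
split; first exact (Lim_inG hX0 hA (Xb_mv) hval hq hc hinc).
move=> n; apply: dle_mono (Lim_tail hX0 hA hq hc hinc n) _.
have := D_ge hX0 hq hc n; lia.
Qed.

Lemma sum_g : exists Lg : F, dle Lg 0 /\ inG (L2f Lg) /\
  forall n, dle (Lg - ratv (Xg n)) (- n.+1%:Z).
Proof.
have hX0 : Xg 0 = Sm 0 1 1 0 by [].
have hA : dle (emb (0 : {poly K})) (0%N)%:Z by rewrite emb0; apply: dle0.
have hval : forall n, valid (Xg n) by move=> n; case: (Inv_all n.*2) => _ [].
have hq : forall n, qd (Xg n.+1) = qd (Xg n) + ((size (cg n)).-1)%:Z.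
  by move=> n; rewrite Xg_mv Xg_alt; case: (facts (n.*2).+1) => _ [].
have hc : forall n, n.+1%:Z <= ((size (cg n)).-1)%:Z.
  move=> n; case: (facts (n.*2).+1) => h _; apply: le_trans h; rewrite -addnn; lia.
have hinc : forall n, deq (ratv (Xg n.+1) - ratv (Xg n)) (- (qd (Xg n) + qd (Xg n.+1))).
  by move=> n; rewrite Xg_mv Xg_alt; case: (facts (n.*2).+1) => _ [].
exists (Lim Xg 0); split; first by rewrite /Lim; eexists.
split; first exact (Lim_inG hX0 hA (Xg_mv) hval hq hc hinc).
move=> n; apply: dle_mono (Lim_tail hX0 hA hq hc hinc n) _.
have := D_ge hX0 hq hc n; lia.
Qed.

Lemma eta_small n : dle (eta al N0 (st n.*2)) (- n%:Z).
Proof.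
case: (Inv_all n.*2) => _ [_ [H [dH [h1 _]]]].
apply: dle_mono (deq_dle dH) _.
have : (0 <= qd (st n.*2).1) by rewrite /qd.
move: h1; rewrite -addnn; lia.
Qed.

Lemma main_sum : exists Lb Lg : F, exists N : nat,
  [/\ dle Lb N%:Z, dle Lg N%:Z, inG (L2f Lb), inG (L2f Lg) & f2L al N0 = Lb + Lg].
Proof.
have [Lb [hb1 [hb2 hb3]]] := sum_b.
have [Lg [hg1 [hg2 hg3]]] := sum_g.
have [N [h1 h2]] := dle_common hb1 hg1.
exists Lb, Lg, N; split => //.
apply/eqP; rewrite -subr_eq0; apply/eqP.
apply: (@dle_zero _ _ 0) => n.
have -> : f2L al N0 - (Lb + Lg) =
  eta al N0 (st n.*2) - (Lb - ratv (Xb n)) - (Lg - ratv (Xg n)).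
  by rewrite /eta /Xb /Xg; ring.
rewrite sub0r; apply: dleB; [apply: dleB|].
- exact: eta_small.
- by apply: dle_mono (hb3 n) _; lia.
- by apply: dle_mono (hg3 n) _; lia.
Qed.

End Main.


Unset Implicit Arguments.

Theorem theorem1p3 (K : fieldType) (alpha : int -> K) :
  is_laurent alpha ->
  exists beta gamma : int -> K,
    [/\ is_laurent beta, is_laurent gamma, inG beta, inG gamma &
        forall n : int, alpha n = beta n + gamma n].
Proof.
move=> [N0 hb].
case: (classic (is_ratfun alpha)) => hr.
  exists alpha, (fun _ => 0); split.
  - by exists N0.
  - by exists 0%N.
  - by left.
  - left; exists 0, 1; split; first exact: oner_neq0.
    exists 0%N; split.
      move=> z; case: z => [m|m] //= hm; rewrite coef1.
      by case: m hm.
    split; first by [].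
    move=> n; rewrite /lmulN big1 => [|i _]; last by rewrite mulr0.
    by case: n => [m|m] //=; rewrite coef0.
  - by move=> n; rewrite addr0.
have [A0 [_ hA0]] := ppart_ex (dle_f2L alpha N0).
have [Lb [Lg [N [h1 h2 h3 h4 he]]]] := main_sum hb hr hA0.
exists (L2f Lb), (L2f Lg); split.
- exact: L2f_laurent h1.
- exact: L2f_laurent h2.
- exact h3.
- exact h4.
- by move=> n; rewrite -(L2f_f2L hb) he (L2fD h1 h2).
Qed.
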